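(* Assume $\delta=d$, $\gamma\ge1$ and $\alpha>0$. Then $\lim_{n\to\infty}d^{-n}\log^+|Q_z^n(w)|=+\infty$ for every $(z,w)\in A_f$, and $$\limsup_{n\to\infty}\frac{1}{d^n}\log^+|Q_z^n(w)|\le\alpha G_p(z)\quad\text{for every }(z,w)\in B_f.$$
   Context: Let $p(z)=z^d+O(z^{d-1})$ be a monic polynomial of degree $\delta=d\ge 2$, and let $q(z,w)=b(z)w^d+(\text{terms of lower degree in } w)$ be a polynomial with $\deg_w q=d$, where $b$ is a monic polynomial of degree $\gamma$. Let $f(z,w)=(p(z),q(z,w))$. Write $Q_z^n=q_{p^{n-1}(z)}\circ\cdots\circ q_{p(z)}\circ q_z$ with $q_z=q(z,\cdot)$, so $f^n(z,w)=(p^n(z),Q_z^n(w))$. Let $A_p=\{z: p^n(z)\to\infty\}$ and $G_p(z)=\lim_n d^{-n}\log^+|p^n(z)|$. Define $\alpha=\max\{(n_j-\gamma)/(d-m_j)\}$ over monomials $z^{n_j}w^{m_j}$ appearing in $q$ with nonzero coefficient and $m_j<d$, and $\alpha=-\infty$ if $q=b(z)w^d$. Let $W_R=\{(z,w):|z|>R,\ |w|>R|z|^\alpha\}$ (if $\alpha=-\infty$: $\{|z|>R,\ w\ne0\}$), fix $R>1$ large enough that $f(W_R)\subset W_R$ and $W_R\subset A_p\times\mathbb{C}$, and set $A_f=\bigcup_{n\ge0}f^{-n}(W_R)$, $B_f=(A_p\times\mathbb{C})\setminus A_f$. *)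

(* Defs.v *)
From Stdlib Require Import Reals Lra.
Open Scope R_scope.

Definition Cx := (R * R)%type.
Definition Cx0 : Cx := (0, 0).
Definition Cx1 : Cx := (1, 0).
Definition Cadd (x y : Cx) : Cx := (fst x + fst y, snd x + snd y).
Definition Cmul (x y : Cx) : Cx :=
  (fst x * fst y - snd x * snd y, fst x * snd y + snd x * fst y).
Fixpoint Cpow (x : Cx) (n : nat) : Cx :=
  match n with O => Cx1 | S k => Cmul x (Cpow x k) end.
Definition Cnorm (x : Cx) : R := sqrt (fst x * fst x + snd x * snd x).

Fixpoint csum (f : nat -> Cx) (n : nat) : Cx :=
  match n with O => Cx0 | S k => Cadd (csum f k) (f k) end.

Definition poly1 (a : nat -> Cx) (d : nat) (z : Cx) : Cx :=
  csum (fun i => Cmul (a i) (Cpow z i)) (S d).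

Definition poly2 (c : nat -> nat -> Cx) (N d : nat) (z w : Cx) : Cx :=
  csum (fun i => csum (fun j => Cmul (c i j) (Cmul (Cpow z i) (Cpow w j))) (S d)) (S N).

Definition logp (x : R) : R := if Rle_dec x 1 then 0 else ln x.

Definition skew (a : nat -> Cx) (c : nat -> nat -> Cx) (N d : nat) (zw : Cx * Cx) : Cx * Cx :=
  (poly1 a d (fst zw), poly2 c N d (fst zw) (snd zw)).
Definition skew_iter a c N d (n : nat) (zw : Cx * Cx) : Cx * Cx :=
  Nat.iter n (skew a c N d) zw.

Definition in_Ap (a : nat -> Cx) (d : nat) (z : Cx) : Prop :=
  cv_infty (fun n => Cnorm (Nat.iter n (poly1 a d) z)).

(* W_R for alpha > 0 (real exponent via Rpower, |z| > R > 1 so |z| > 0). *)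
Definition in_WR (alpha Rr : R) (zw : Cx * Cx) : Prop :=
  Cnorm (fst zw) > Rr /\ Cnorm (snd zw) > Rr * Rpower (Cnorm (fst zw)) alpha.

Definition is_alpha (c : nat -> nat -> Cx) (N d gamma : nat) (alpha : R) : Prop :=
  (exists i j, (i <= N)%nat /\ (j < d)%nat /\ c i j <> Cx0 /\
      alpha = (INR i - INR gamma) / (INR d - INR j)) /\
  (forall i j, (i <= N)%nat -> (j < d)%nat -> c i j <> Cx0 ->
      (INR i - INR gamma) / (INR d - INR j) <= alpha).

(* Main.v *)
Require Import Defs.
From Stdlib Require Import Reals.
From Stdlib Require Import Lra Lia.
Open Scope R_scope.
From HB Require structures.
From mathcomp Require all_boot all_order all_algebra all_field.
From mathcomp Require Rstruct complex.
Module MC.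
Import HB.structures.
Import all_boot all_order all_algebra all_field.
Import Rstruct complex.
Import Order.TTheory GRing.Theory Num.Theory.
Local Open Scope ring_scope.
Local Notation C := (Rcomplex R).
Local Notation nc := (@Normc.normc R).
Definition phi (x : Cx) : C := Complex (fst x) (snd x).
Lemma phiD x y : phi (Cadd x y) = phi x + phi y.
Proof. by case: x; case: y. Qed.
Lemma phiM x y : phi (Cmul x y) = phi x * phi y.
Proof. by case: x => a b; case: y => c e. Qed.
Lemma phi0 : phi Cx0 = 0. Proof. by []. Qed.
Lemma phi1 : phi Cx1 = 1. Proof. by []. Qed.
Lemma phi_inj x y : phi x = phi y -> x = y.
Proof. by case: x => a b; case: y => c e [-> ->]. Qed.
Lemma phiX x n : phi (Cpow x n) = phi x ^+ n.
Proof. elim: n => [|n IH] /=; first by rewrite expr0. by rewrite phiM IH exprS. Qed.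
Lemma phi_csum f n : phi (csum f n) = \sum_(k < n) phi (f k).
Proof. elim: n => [|n IH] /=; first by rewrite big_ord0. by rewrite phiD IH big_ord_recr. Qed.
Lemma cnormE x : Cnorm x = nc (phi x).
Proof. case: x => a b. by rewrite /Cnorm /= RsqrtE !expr2. Qed.
Definition Bq (c : nat -> nat -> Cx) N j z := csum (fun i => Cmul (c i j) (Cpow z i)) (S N).
Definition qpoly c N d z : {poly C} := \poly_(j < d.+1) phi (Bq c N j z).
Lemma poly2_eval c N d z w : phi (poly2 c N d z w) = (qpoly c N d z).[phi w].
Proof.
rewrite /poly2 /qpoly horner_poly phi_csum.
under eq_bigr => i _ do rewrite phi_csum.
rewrite exchange_big /=. apply: eq_bigr => j _.
rewrite /Bq phi_csum mulr_suml. apply: eq_bigr => i _.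
by rewrite !phiM !phiX mulrA.
Qed.

Fixpoint Pn a c N d Z n : {poly C} :=
  match n with O => 'X | S k => qpoly c N d (Nat.iter k (poly1 a d) Z) \Po Pn a c N d Z k end.

Lemma fst_skew a c N d n zw : fst (skew_iter a c N d n zw) = Nat.iter n (poly1 a d) (fst zw).
Proof. elim: n => [|n IH] //=. by rewrite /skew_iter /= -IH. Qed.

Lemma Pn_eval a c N d Z n y :
  phi (snd (skew_iter a c N d n (Z, y))) = (Pn a c N d Z n).[phi y].
Proof.
elim: n => [|n IH] /=; first by rewrite hornerX.
rewrite horner_comp -IH -poly2_eval. 
have -> : fst (skew_iter a c N d n (Z, y)) = Nat.iter n (poly1 a d) Z by rewrite fst_skew.
by [].
Qed.

Lemma ncX (x : C) n : nc (x ^+ n) = nc x ^+ n.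
Proof. elim: n => [|n IH]; first by rewrite !expr0 Normc.normc1. by rewrite !exprS Normc.normcM IH. Qed.

Fixpoint Bn a c N d Z n : R :=
  match n with O => 1 | S k => Rmult (Cnorm (Bq c N d (Nat.iter k (poly1 a d) Z))) (pow (Bn a c N d Z k) d) end.

Lemma Pn_size_lead a c N d Z (hd : (1 <= d)%N)
  (hb : forall k, Bq c N d (Nat.iter k (poly1 a d) Z) <> Cx0) n :
  size (Pn a c N d Z n) = (d ^ n).+1 /\ nc (lead_coef (Pn a c N d Z n)) = Bn a c N d Z n.
Proof.
elim: n => [|n [IHs IHl]] /=.
  by rewrite size_polyX lead_coefX Normc.normc1.
set z := Nat.iter n (poly1 a d) Z.
have hq0 : phi (Bq c N d z) != 0.
  apply/negP => /eqP h; apply: (hb n); apply: phi_inj; by rewrite h.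
have sq : size (qpoly c N d z) = d.+1 by rewrite /qpoly size_poly_eq.
have lq : lead_coef (qpoly c N d z) = phi (Bq c N d z).
  by rewrite /qpoly lead_coef_poly.
have s1 : (1 < size (Pn a c N d Z n))%N by rewrite IHs ltnS expn_gt0 (leq_trans _ hd).
split.
  have := size_comp_poly (qpoly c N d z) (Pn a c N d Z n).
  rewrite sq IHs /= expnS => h.
  have hne : size (qpoly c N d z \Po Pn a c N d Z n) != 0%N.
    apply/negP => /eqP h0; move: h; rewrite h0 /=.
    move=> h1; have : (0 < d * d ^ n)%N by rewrite muln_gt0 expn_gt0 (leq_trans _ hd) // andbT ltnS.
    by rewrite -h1.
  by rewrite -h prednK // lt0n.
rewrite lead_coef_comp // sq /= Normc.normcM lq -cnormE ncX IHl.
by rewrite RpowE.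
Qed.

Lemma nc_ge0 (x : C) : 0 <= nc x.
Proof. case: x => a b /=. exact: sqrtr_ge0. Qed.

Lemma nc_sub_ge (x y : C) : nc x - nc y <= nc (x - y).
Proof.
have := le_normcD (x - y) y. rewrite subrK. move=> h. by rewrite lerBlDr.
Qed.

Lemma prod_bound (rs : seq C) (y : C) (r : R) :
  (forall z, z \in rs -> nc z <= r) -> r < nc y ->
  (nc y - r) ^+ size rs <= nc ((\prod_(z <- rs) ('X - z%:P)).[y]).
Proof.
move=> Hz Hy; elim: rs Hz => [|z rs IH] Hz.
  by rewrite big_nil hornerC expr0 Normc.normc1.
rewrite big_cons hornerM hornerXsubC Normc.normcM /= exprS.
have h1 : nc y - r <= nc (y - z).
  apply: le_trans (nc_sub_ge y z). rewrite lerB //. apply: Hz. by rewrite in_cons eqxx.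
apply: ler_pM => //.
- by rewrite subr_ge0 ltW.
- by apply: exprn_ge0; rewrite subr_ge0 ltW.
- apply: IH => w hw; apply: Hz; by rewrite in_cons hw orbT.
Qed.

Lemma fta_bound (P : {poly C}) (r : R) :
  (forall x : C, r < nc x -> ~~ root P x) ->
  forall y, r < nc y -> nc (lead_coef P) * (nc y - r) ^+ (size P).-1 <= nc P.[y].
Proof.
move=> Hr y Hy.
have [rs Prs] := closed_field_poly_normal P.
have [P0|Pn0] := eqVneq P 0.
  by rewrite P0 lead_coef0 Normc.normc0 mul0r nc_ge0.
have l0 : lead_coef P != 0 by rewrite lead_coef_eq0.
have Hsz : (size P).-1 = size rs.
  by rewrite {1}Prs size_scale // size_prod_XsubC.
rewrite Hsz {2}Prs hornerZ Normc.normcM.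
apply: ler_wpM2l; first exact: nc_ge0.
apply: prod_bound => // z hz.
rewrite leNgt; apply/negP => hzr.
have := Hr z hzr. rewrite Prs rootZ // root_prod_XsubC hz. by [].
Qed.

Lemma natpowE d n : Nat.pow d n = expn d n.
Proof. elim: n => [|n IH] //=. by rewrite expnS IH. Qed.

Lemma key a c N d Z (r : R) (hd0 : le 1 d)
  (hb : forall k, Bq c N d (Nat.iter k (poly1 a d) Z) <> Cx0) (hr : Rle 0 r)
  (hnz : forall n y, Rlt r (Cnorm y) -> snd (skew_iter a c N d n (Z, y)) <> Cx0) :
  forall n y, Rlt r (Cnorm y) ->
    Rle (Rmult (Bn a c N d Z n) (pow (Rminus (Cnorm y) r) (Nat.pow d n)))
        (Cnorm (snd (skew_iter a c N d n (Z, y)))).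
Proof.
move=> n y hy.
have hd : (1 <= d)%N by apply/ssrnat.leP.
have [hs hl] := Pn_size_lead a c N d Z hd hb n.
apply/RleP.
have hy' : r < nc (phi y) by rewrite -cnormE; apply/RltP.
rewrite RpowE natpowE !cnormE Pn_eval -hl.
have := fta_bound (Pn a c N d Z n) r _ (phi y).
rewrite hs /=. apply.
- move=> x hx. apply/negP => /rootP h.
  move: x hx h; case=> u v hx h.
  apply: (hnz n (u, v)).
  + by rewrite cnormE; apply/RltP.
  + apply: phi_inj. by rewrite Pn_eval h.
- exact: hy'.
Qed.

Lemma Cnorm_mul x y : Cnorm (Cmul x y) = Rmult (Cnorm x) (Cnorm y).
Proof. by rewrite !cnormE phiM Normc.normcM. Qed.
Lemma Cnorm_add x y : Rle (Cnorm (Cadd x y)) (Rplus (Cnorm x) (Cnorm y)).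
Proof. apply/RleP. rewrite !cnormE phiD. exact: le_normcD. Qed.
Lemma Cnorm_pow x n : Cnorm (Cpow x n) = pow (Cnorm x) n.
Proof. by rewrite !cnormE phiX ncX RpowE. Qed.
Lemma Cnorm_eq0 x : Cnorm x = 0%R -> x = Cx0.
Proof. rewrite cnormE => h. apply: phi_inj. exact: Normc.eq0_normc. Qed.
Lemma Cnorm_Cx1 : Cnorm Cx1 = 1%R.
Proof. by rewrite cnormE phi1 Normc.normc1. Qed.
Lemma Cnorm_Cx0 : Cnorm Cx0 = 0%R.
Proof. by rewrite cnormE phi0 Normc.normc0. Qed.

Lemma Cnorm_add_rev x y : Rle (Rminus (Cnorm y) (Cnorm x)) (Cnorm (Cadd x y)).
Proof.
apply/RleP. rewrite !cnormE phiD.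
have h := le_normcD (phi x + phi y) (- phi x).
rewrite addrC addKr normcN in h. rewrite lerBlDr. exact: h.
Qed.
End MC.
Import MC.

Lemma Cnorm_ge0 x : 0 <= Cnorm x.
Proof. unfold Cnorm. apply sqrt_pos. Qed.

Lemma Cmul1l x : Cmul Cx1 x = x.
Proof. destruct x as [u v]; unfold Cmul, Cx1; simpl; f_equal; ring. Qed.
Lemma Cmul0l x : Cmul Cx0 x = Cx0.
Proof. destruct x as [u v]; unfold Cmul, Cx0; simpl; f_equal; ring. Qed.
Lemma Cadd0r x : Cadd x Cx0 = x.
Proof. destruct x as [u v]; unfold Cadd, Cx0; simpl; f_equal; ring. Qed.

Lemma Cnorm_Cx0' : Cnorm Cx0 = 0.
Proof. unfold Cnorm, Cx0; simpl. replace (0*0+0*0) with 0 by ring. apply sqrt_0. Qed.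
Lemma Cnorm_Cx1' : Cnorm Cx1 = 1.
Proof. unfold Cnorm, Cx1; simpl. replace (1*1+0*0) with 1 by ring. apply sqrt_1. Qed.
Lemma Cnorm_eq0' x : Cnorm x = 0 -> x = Cx0.
Proof.
destruct x as [u v]; unfold Cnorm, Cx0; simpl; intro h.
apply sqrt_eq_0 in h; [|nra].
assert (u = 0) by nra. assert (v = 0) by nra. subst. reflexivity.
Qed.

Fixpoint nsum (e : nat -> Cx) (m : nat) : R :=
  match m with O => 0 | S k => nsum e k + Cnorm (e k) end.

Lemma nsum_ge0 e m : 0 <= nsum e m.
Proof. induction m; simpl. lra. pose proof (Cnorm_ge0 (e m)). lra. Qed.

Lemma csum_bound e m z : 1 <= Cnorm z ->
  Cnorm (csum (fun i => Cmul (e i) (Cpow z i)) m) <= nsum e m * Cnorm z ^ (pred m).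
Proof.
intros hz. induction m as [|m IH]; simpl.
- rewrite Cnorm_Cx0'. lra.
- eapply Rle_trans. apply Cnorm_add.
  rewrite Cnorm_mul, Cnorm_pow.
  assert (h1 : Cnorm z ^ pred m <= Cnorm z ^ m) by (apply Rle_pow; [lra| lia]).
  pose proof (nsum_ge0 e m). pose proof (Cnorm_ge0 (e m)).
  assert (nsum e m * Cnorm z ^ pred m <= nsum e m * Cnorm z ^ m) by (apply Rmult_le_compat_l; lra).
  rewrite Rmult_plus_distr_r. lra.
Qed.

Lemma monic_bounds e m z : e m = Cx1 -> (1 <= m)%nat -> 2 * nsum e m + 1 <= Cnorm z ->
  Cnorm z ^ m / 2 <= Cnorm (csum (fun i => Cmul (e i) (Cpow z i)) (S m)) <= 2 * Cnorm z ^ m.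
Proof.
intros he hm hz. simpl csum. rewrite he, Cmul1l.
pose proof (nsum_ge0 e m) as hA.
assert (hz1 : 1 <= Cnorm z) by lra.
pose proof (csum_bound e m z hz1) as hL.
set (L := csum (fun i => Cmul (e i) (Cpow z i)) m) in *.
assert (hzm : Cnorm z ^ m = Cnorm z * Cnorm z ^ pred m).
{ destruct m as [|m']. lia. simpl. reflexivity. }
assert (hp : 0 <= Cnorm z ^ pred m) by (apply pow_le; lra).
assert (hb : nsum e m * Cnorm z ^ pred m <= Cnorm z ^ m / 2).
{ rewrite hzm. assert (nsum e m <= Cnorm z / 2) by lra.
  apply Rmult_le_compat_r with (r := Cnorm z ^ pred m) in H; [|lra]. lra. }
pose proof (Cnorm_add L (Cpow z m)) as h1. rewrite Cnorm_pow in h1.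
pose proof (Cnorm_add_rev L (Cpow z m)) as h2. rewrite Cnorm_pow in h2.
split; lra.
Qed.

Lemma csum_tail (f : nat -> Cx) m : (forall i, (m <= i)%nat -> f i = Cx0) ->
  forall n, (m <= n)%nat -> csum f n = csum f m.
Proof.
intros hf n hn. induction hn as [|n hn IH]. reflexivity.
simpl. rewrite IH, hf by lia. apply Cadd0r.
Qed.

Lemma ln_le' x y : 0 < x -> x <= y -> ln x <= ln y.
Proof. intros hx hxy. destruct (Rle_lt_or_eq_dec _ _ hxy) as [h|h].
  left; apply ln_increasing; lra. right; subst; reflexivity. Qed.

Lemma logp_ge_ln x : 0 < x -> ln x <= logp x.
Proof.
intros hx; unfold logp; destruct (Rle_dec x 1) as [h|h].
- rewrite <- ln_1. apply ln_le'; lra.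
- lra.
Qed.

Lemma logp_ln x : 1 < x -> logp x = ln x.
Proof. intros hx; unfold logp; destruct (Rle_dec x 1); [lra|reflexivity]. Qed.

Lemma logp_ge0 x : 0 <= logp x.
Proof.
unfold logp; destruct (Rle_dec x 1) as [h|h]. lra.
rewrite <- ln_1. apply ln_le'; lra.
Qed.

Lemma logp_mono x y : x <= y -> logp x <= logp y.
Proof.
intros hxy. unfold logp.
destruct (Rle_dec x 1) as [h|h]; destruct (Rle_dec y 1) as [h'|h'].
- lra.
- rewrite <- ln_1. apply ln_le'; lra.
- lra.
- apply ln_le'; lra.
Qed.

Lemma dpow_ge d n : (2 <= d)%nat -> INR (S n) <= INR d ^ n.
Proof.
intros hd. assert (hd' : 2 <= INR d) by (apply (le_INR 2); lia).
induction n as [|n IH]. simpl. lra.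
replace (INR (S (S n))) with (INR (S n) + 1) by (rewrite (S_INR (S n)); reflexivity).
replace (INR d ^ S n) with (INR d * INR d ^ n) by reflexivity.
rewrite S_INR in *. pose proof (pos_INR n).
assert (0 <= (INR d - 2) * INR d ^ n) by (apply Rmult_le_pos; lra). nra.
Qed.

Lemma dpow_pos d n : (2 <= d)%nat -> 0 < INR d ^ n.
Proof. intros hd. apply pow_lt. assert (2 <= INR d) by (apply (le_INR 2); lia). lra. Qed.

Lemma small_eventually d (c : R) eps : (2 <= d)%nat -> eps > 0 ->
  exists N, forall n, (N <= n)%nat -> c / INR d ^ n <= eps.
Proof.
intros hd he.
destruct (INR_unbounded (Rabs c / eps)) as [N hN].
exists N. intros n hn.
pose proof (dpow_pos d n hd) as hp. pose proof (dpow_ge d n hd) as hg.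
assert (INR N <= INR n) by (apply le_INR; lia).
rewrite S_INR in hg.
apply Rmult_le_reg_r with (r := INR d ^ n); [lra|].
unfold Rdiv. rewrite Rmult_assoc, Rinv_l by lra. rewrite Rmult_1_r.
assert (Rabs c < eps * INR N).
{ apply Rmult_lt_compat_r with (r := eps) in hN; [|lra].
  unfold Rdiv in hN. rewrite Rmult_assoc, Rinv_l in hN by lra. lra. }
pose proof (Rle_abs c). nra.
Qed.

Lemma p_bounds a d z : a d = Cx1 -> (1 <= d)%nat -> 2 * nsum a d + 1 <= Cnorm z ->
  Cnorm z ^ d / 2 <= Cnorm (poly1 a d z) <= 2 * Cnorm z ^ d.
Proof. intros. unfold poly1. apply monic_bounds; assumption. Qed.

Lemma b_bounds (c : nat -> nat -> Cx) N d gamma z :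
  c gamma d = Cx1 -> (forall i, (gamma < i)%nat -> c i d = Cx0) -> (1 <= gamma <= N)%nat ->
  2 * nsum (fun i => c i d) gamma + 1 <= Cnorm z ->
  Cnorm z ^ gamma / 2 <= Cnorm (Bq c N d z).
Proof.
intros hl hdeg hg hz. unfold Bq.
rewrite (csum_tail _ (S gamma)) by (intros; try lia; rewrite hdeg by lia; apply Cmul0l).
destruct (monic_bounds (fun i => c i d) gamma z hl ltac:(lia) hz). assumption.
Qed.

Lemma skew_iter_add a c N d n m zw :
  skew_iter a c N d (n + m) zw = skew_iter a c N d n (skew_iter a c N d m zw).
Proof. unfold skew_iter. apply Nat.iter_add. Qed.

Lemma WR_iter a c N d alpha Rr :
  (forall zw, in_WR alpha Rr zw -> in_WR alpha Rr (skew a c N d zw)) ->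
  forall n zw, in_WR alpha Rr zw -> in_WR alpha Rr (skew_iter a c N d n zw).
Proof.
intros H n; induction n as [|n IH]; intros zw h. exact h.
change (in_WR alpha Rr (skew a c N d (skew_iter a c N d n zw))). apply H, IH, h.
Qed.

Lemma Rpower_pos' x y : 0 < Rpower x y.
Proof. unfold Rpower. apply exp_pos. Qed.

Lemma Un_cv_shift (u : nat -> R) n0 l : Un_cv (fun k => u (n0 + k)%nat) l -> Un_cv u l.
Proof.
intros h eps he. destruct (h eps he) as [N hN]. exists (n0 + N)%nat. intros n hn.
replace n with (n0 + (n - n0))%nat by lia. apply hN. lia.
Qed.

Lemma div_nonneg x y : 0 <= x -> 0 < y -> 0 <= x / y.
Proof. intros. unfold Rdiv. apply Rmult_le_pos; [assumption|left; apply Rinv_0_lt_compat; assumption]. Qed.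

Lemma Un_cv_ext (u v : nat -> R) l : (forall n, u n = v n) -> Un_cv u l -> Un_cv v l.
Proof. intros h hu eps he. destruct (hu eps he) as [N hN]. exists N. intros n hn. rewrite <- h. auto. Qed.

Lemma ln_step a d x : a d = Cx1 -> (2 <= d)%nat -> 2 * nsum a d + 1 + 4 < Cnorm x ->
  INR d * ln (Cnorm x) - ln 2 <= ln (Cnorm (poly1 a d x)) <= INR d * ln (Cnorm x) + ln 2.
Proof.
intros hl hd hx. pose proof (nsum_ge0 a d).
destruct (p_bounds a d x hl ltac:(lia) ltac:(lra)) as [h1 h2].
assert (hxp : 0 < Cnorm x) by lra.
assert (hp : 0 < Cnorm x ^ d) by (apply pow_lt; lra).
assert (hln2 : ln (Cnorm x ^ d / 2) = INR d * ln (Cnorm x) - ln 2).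
{ unfold Rdiv. rewrite ln_mult, ln_Rinv, ln_pow by lra. ring. }
assert (hln2' : ln (2 * Cnorm x ^ d) = INR d * ln (Cnorm x) + ln 2).
{ rewrite ln_mult, ln_pow by lra. ring. }
split.
- rewrite <- hln2. apply ln_le'; [|exact h1]. apply Rdiv_lt_0_compat; lra.
- rewrite <- hln2'. apply ln_le'; [|exact h2]. lra.
Qed.

Lemma Gp_exists a d z n0 : a d = Cx1 -> (2 <= d)%nat ->
  (forall n, (n0 <= n)%nat -> 2 * nsum a d + 1 + 4 < Cnorm (Nat.iter n (poly1 a d) z)) ->
  exists G, Un_cv (fun n => logp (Cnorm (Nat.iter n (poly1 a d) z)) / INR d ^ n) G.
Proof.
intros hl hd hK.
set (zn := fun n => Nat.iter n (poly1 a d) z).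
assert (hK' : forall n, (n0 <= n)%nat -> 2 * nsum a d + 1 + 4 < Cnorm (zn n)) by exact hK.
clear hK. rename hK' into hK.
assert (hD : 2 <= INR d) by (apply (le_INR 2); lia).
pose proof (nsum_ge0 a d) as hA.
assert (hl2 : 0 < ln 2) by (rewrite <- ln_1; apply ln_increasing; lra).
set (v := fun k => ln (Cnorm (zn (n0 + k)%nat)) / INR d ^ (n0 + k)
                   + ln 2 / ((INR d - 1) * INR d ^ (n0 + k))).
assert (hdec : Un_decreasing v).
{ intro k. unfold v.
  replace (n0 + S k)%nat with (S (n0 + k)) by lia.
  set (m := (n0 + k)%nat).
  assert (hzm := hK m ltac:(unfold m; lia)).
  destruct (ln_step a d (zn m) hl hd hzm) as [_ hY].
  change (zn (S m)) with (poly1 a d (zn m)).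
  set (X := ln (Cnorm (zn m))) in *. set (Y := ln (Cnorm (poly1 a d (zn m)))) in *.
  pose proof (dpow_pos d m hd) as hP.
  set (P := INR d ^ m) in *.
  replace (INR d ^ S m) with (INR d * P) by reflexivity.
  assert (e : X / P + ln 2 / ((INR d - 1) * P) - (Y / (INR d * P) + ln 2 / ((INR d - 1) * (INR d * P)))
              = (INR d * X - Y + ln 2) / (INR d * P)).
  { field. repeat split; lra. }
  assert (0 <= (INR d * X - Y + ln 2) / (INR d * P)).
  { apply div_nonneg; [lra| nra]. }
  lra. }
assert (hlb : has_lb v).
{ exists 0. intros x [k hk]. unfold opp_seq in hk. subst x. unfold v.
  assert (hzm := hK (n0 + k)%nat ltac:(lia)).
  pose proof (dpow_pos d (n0 + k) hd).
  assert (0 <= ln (Cnorm (zn (n0 + k)%nat))) by (rewrite <- ln_1; apply ln_le'; lra).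
  assert (0 <= ln (Cnorm (zn (n0 + k)%nat)) / INR d ^ (n0 + k)) by (apply div_nonneg; lra).
  assert (0 <= ln 2 / ((INR d - 1) * INR d ^ (n0 + k))) by (apply div_nonneg; [lra|nra]).
  lra. }
destruct (decreasing_cv v hdec hlb) as [G hG].
exists G.
apply (Un_cv_shift _ n0).
assert (he : Un_cv (fun k => ln 2 / ((INR d - 1) * INR d ^ (n0 + k))) 0).
{ intros eps heps. destruct (small_eventually d (ln 2 / (INR d - 1)) (eps / 2) hd ltac:(lra)) as [N hN].
  exists N. intros n hn. unfold R_dist. rewrite Rminus_0_r.
  pose proof (dpow_pos d (n0 + n) hd).
  assert (hpos : 0 <= ln 2 / ((INR d - 1) * INR d ^ (n0 + n))) by (apply div_nonneg; [lra|nra]).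
  rewrite Rabs_right by lra.
  assert (h := hN (n0 + n)%nat ltac:(lia)).
  replace (ln 2 / ((INR d - 1) * INR d ^ (n0 + n))) with (ln 2 / (INR d - 1) / INR d ^ (n0 + n))
    by (field; split; lra).
  lra. }
pose proof (CV_minus _ _ _ _ hG he) as hc. rewrite Rminus_0_r in hc.
refine (Un_cv_ext _ _ _ _ hc).
intro k. simpl. unfold v.
assert (hzm := hK (n0 + k)%nat ltac:(lia)).
unfold zn in *. rewrite (logp_ln (Cnorm (Nat.iter (n0 + k) (poly1 a d) z))) by lra. ring.
Qed.

Lemma Rpower_ge1 x y : 1 < x -> 0 <= y -> 1 <= Rpower x y.
Proof.
intros hx hy. unfold Rpower. rewrite <- exp_0.
assert (0 <= ln x) by (rewrite <- ln_1; apply ln_le'; lra).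
destruct (Rle_lt_or_eq_dec 0 (y * ln x) ltac:(apply Rmult_le_pos; lra)) as [h|h].
- left. apply exp_increasing. exact h.
- rewrite <- h. lra.
Qed.

Lemma part2 d N a c alpha Rr (Hd : (2 <= d)%nat) (Ha_lead : a d = Cx1)
  (HR : 1 < Rr) (Halpha_pos : 0 < alpha) z w :
  in_Ap a d z ->
  ~ (exists n, in_WR alpha Rr (skew_iter a c N d n (z, w))) ->
  exists G : R,
    Un_cv (fun n => logp (Cnorm (Nat.iter n (poly1 a d) z)) / INR d ^ n) G /\
    (forall eps, eps > 0 -> exists M : nat, forall n, (M <= n)%nat ->
       logp (Cnorm (snd (skew_iter a c N d n (z, w)))) / INR d ^ n <= alpha * G + eps).
Proof.
intros Hz Hnot.
pose proof (nsum_ge0 a d) as hA.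
destruct (Hz (2 * nsum a d + 1 + 4 + Rr)) as [n0 hn0].
destruct (Gp_exists a d z n0 Ha_lead Hd) as [G hG].
{ intros n hn. pose proof (hn0 n hn). lra. }
exists G. split; [exact hG|].
intros eps heps.
destruct (hG (eps / (2 * alpha))) as [N1 hN1].
{ apply Rdiv_lt_0_compat; lra. }
destruct (small_eventually d (ln Rr) (eps / 2) Hd ltac:(lra)) as [N2 hN2].
exists (n0 + N1 + N2)%nat. intros n hn.
assert (hzn := hn0 n ltac:(lia)).
set (zn := Nat.iter n (poly1 a d) z) in *.
assert (hfst : fst (skew_iter a c N d n (z, w)) = zn) by (rewrite fst_skew; reflexivity).
set (wn := snd (skew_iter a c N d n (z, w))).
assert (hw : Cnorm wn <= Rr * Rpower (Cnorm zn) alpha).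
{ destruct (Rle_or_lt (Cnorm wn) (Rr * Rpower (Cnorm zn) alpha)) as [h|h]; [exact h|].
  exfalso. apply Hnot. exists n. unfold in_WR. rewrite hfst. split; [lra|exact h]. }
assert (hz1 : 1 < Cnorm zn) by lra.
pose proof (Rpower_ge1 (Cnorm zn) alpha hz1 ltac:(lra)) as hRp.
assert (hlog : logp (Cnorm wn) <= ln Rr + alpha * ln (Cnorm zn)).
{ eapply Rle_trans. apply logp_mono, hw.
  rewrite logp_ln by nra. rewrite ln_mult by lra. rewrite ln_Rpower. lra. }
pose proof (dpow_pos d n Hd) as hP.
assert (hu := hN1 n ltac:(lia)). unfold R_dist in hu. apply Rabs_def2 in hu. fold zn in hu.
rewrite (logp_ln (Cnorm zn)) in hu by lra.
assert (hs := hN2 n ltac:(lia)).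
assert (e1 : logp (Cnorm wn) / INR d ^ n <= (ln Rr + alpha * ln (Cnorm zn)) / INR d ^ n).
{ unfold Rdiv. apply Rmult_le_compat_r; [left; apply Rinv_0_lt_compat; lra| exact hlog]. }
assert (e2 : (ln Rr + alpha * ln (Cnorm zn)) / INR d ^ n
             = ln Rr / INR d ^ n + alpha * (ln (Cnorm zn) / INR d ^ n)) by (field; lra).
assert (e3 : alpha * (ln (Cnorm zn) / INR d ^ n) <= alpha * G + eps / 2).
{ destruct hu as [hu _].
  assert (ln (Cnorm zn) / INR d ^ n < G + eps / (2 * alpha)) by lra.
  apply Rmult_lt_compat_l with (r := alpha) in H; [|lra].
  replace (alpha * (G + eps / (2 * alpha))) with (alpha * G + eps / 2) in H by (field; lra).
  lra. }
lra.
Qed.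

Lemma part1 d N gamma a c alpha Rr (Hd : (2 <= d)%nat) (Ha_lead : a d = Cx1)
  (Hgamma : (1 <= gamma <= N)%nat) (Hb_lead : c gamma d = Cx1)
  (Hb_deg : forall i, (gamma < i)%nat -> c i d = Cx0) (HR : 1 < Rr)
  (HWinv : forall zw, in_WR alpha Rr zw -> in_WR alpha Rr (skew a c N d zw))
  (HWAp : forall zw, in_WR alpha Rr zw -> in_Ap a d (fst zw)) z w :
  (exists n, in_WR alpha Rr (skew_iter a c N d n (z, w))) ->
  cv_infty (fun n => logp (Cnorm (snd (skew_iter a c N d n (z, w)))) / INR d ^ n).
Proof.
intros [m hm].
pose proof (nsum_ge0 a d) as hA. pose proof (nsum_ge0 (fun i => c i d) gamma) as hB.
assert (hD : 2 <= INR d) by (apply (le_INR 2); lia).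
assert (hl2 : 0 < ln 2) by (rewrite <- ln_1; apply ln_increasing; lra).
set (K := 2 * nsum a d + 1 + 4 + (2 * nsum (fun i => c i d) gamma + 1) + Rr).
destruct (HWAp _ hm K) as [n' hn'].
set (ZW := skew_iter a c N d n' (skew_iter a c N d m (z, w))).
assert (hZW : in_WR alpha Rr ZW) by (apply WR_iter; assumption).
set (Z := fst ZW). set (W := snd ZW).
assert (hZk : forall k, K < Cnorm (Nat.iter k (poly1 a d) Z)).
{ intro k. unfold Z, ZW. rewrite fst_skew. rewrite <- Nat.iter_add. apply hn'. lia. }
assert (hbk : forall k, Cnorm (Nat.iter k (poly1 a d) Z) / 2 <= Cnorm (Bq c N d (Nat.iter k (poly1 a d) Z))).
{ intro k. specialize (hZk k).
  eapply Rle_trans; [|apply (b_bounds c N d gamma); try assumption; unfold K in hZk; lra].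
  assert (Cnorm (Nat.iter k (poly1 a d) Z) ^ 1 <= Cnorm (Nat.iter k (poly1 a d) Z) ^ gamma)
    by (apply Rle_pow; [unfold K in hZk; lra| lia]).
  rewrite pow_1 in H. lra. }
assert (hb : forall k, Bq c N d (Nat.iter k (poly1 a d) Z) <> Cx0).
{ intros k h. specialize (hbk k). specialize (hZk k). rewrite h, Cnorm_Cx0' in hbk. unfold K in hZk. lra. }
set (L0 := ln (Cnorm Z) - ln 2).
assert (hL0 : 0 < L0).
{ unfold L0. assert (hz0 := hZk 0%nat). simpl in hz0. unfold K in hz0.
  assert (ln 2 < ln (Cnorm Z)) by (apply ln_increasing; lra). lra. }
assert (hgrow : forall k, INR d ^ k * L0 <= ln (Cnorm (Nat.iter k (poly1 a d) Z)) - ln 2).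
{ induction k as [|k IH].
  - simpl. unfold L0. lra.
  - assert (hk := hZk k). unfold K in hk.
    destruct (ln_step a d (Nat.iter k (poly1 a d) Z) Ha_lead Hd ltac:(lra)) as [hY _].
    change (Nat.iter (S k) (poly1 a d) Z) with (poly1 a d (Nat.iter k (poly1 a d) Z)).
    replace (INR d ^ S k) with (INR d * INR d ^ k) by reflexivity.
    assert (INR d * (INR d ^ k * L0) <= INR d * (ln (Cnorm (Nat.iter k (poly1 a d) Z)) - ln 2))
      by (apply Rmult_le_compat_l; lra).
    assert (0 <= (INR d - 2) * ln 2) by (apply Rmult_le_pos; lra).
    nra. }
assert (hBn : forall n, 0 < Bn a c N d Z n /\
          INR n * INR d ^ n * L0 <= INR d * ln (Bn a c N d Z n)).
{ induction n as [|n [IHp IHl]].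
  - simpl. rewrite ln_1. split; lra.
  - simpl Bn. set (bn := Cnorm (Bq c N d (Nat.iter n (poly1 a d) Z))).
    assert (hbn : Cnorm (Nat.iter n (poly1 a d) Z) / 2 <= bn) by apply hbk.
    assert (hzn := hZk n). unfold K in hzn.
    assert (hbp : 0 < bn) by lra.
    assert (hpp : 0 < Bn a c N d Z n ^ d) by (apply pow_lt; lra).
    split; [apply Rmult_lt_0_compat; lra|].
    rewrite ln_mult, ln_pow by lra.
    assert (hlb : ln (Cnorm (Nat.iter n (poly1 a d) Z)) - ln 2 <= ln bn).
    { replace (ln (Cnorm (Nat.iter n (poly1 a d) Z)) - ln 2)
        with (ln (Cnorm (Nat.iter n (poly1 a d) Z) / 2))
        by (unfold Rdiv; rewrite ln_mult, ln_Rinv by lra; ring).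
      apply ln_le'; [lra|exact hbn]. }
    pose proof (hgrow n) as hg.
    rewrite S_INR. replace (INR d ^ S n) with (INR d * INR d ^ n) by reflexivity.
    assert (INR d * (INR n * INR d ^ n * L0) <= INR d * (INR d * ln (Bn a c N d Z n)))
      by (apply Rmult_le_compat_l; lra).
    assert (INR d * (INR d ^ n * L0) <= INR d * ln bn) by (apply Rmult_le_compat_l; lra).
    nra. }
set (r := Rr * Rpower (Cnorm Z) alpha).
destruct hZW as [hZR hWr]. fold Z W r in hZR, hWr.
assert (hr0 : 0 <= r) by (unfold r; pose proof (Rpower_pos' (Cnorm Z) alpha); nra).
assert (hnz : forall n y, r < Cnorm y -> snd (skew_iter a c N d n (Z, y)) <> Cx0).
{ intros n y hy h.
  assert (hin : in_WR alpha Rr (skew_iter a c N d n (Z, y))) by (apply WR_iter; [assumption|unfold r in hy; split; simpl; lra]).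
  destruct hin as [_ h2]. rewrite h, Cnorm_Cx0' in h2.
  pose proof (Rpower_pos' (Cnorm (fst (skew_iter a c N d n (Z, y)))) alpha).
  assert (0 < Rr * Rpower (Cnorm (fst (skew_iter a c N d n (Z, y)))) alpha) by (apply Rmult_lt_0_compat; lra).
  lra. }
assert (hkey := key a c N d Z r ltac:(lia) hb hr0 hnz).
set (c0 := ln (Cnorm W - r)).
assert (hWn : forall j, INR d ^ j * (INR j * L0 / INR d + c0)
           <= ln (Cnorm (snd (skew_iter a c N d j (Z, W))))).
{ intro j. assert (hk := hkey j W hWr).
  destruct (hBn j) as [hBp hBl].
  assert (hWr' : 0 < Cnorm W - r) by lra.
  assert (hpw : 0 < (Cnorm W - r) ^ Nat.pow d j) by (apply pow_lt; lra).
  assert (hl : ln (Bn a c N d Z j * (Cnorm W - r) ^ Nat.pow d j)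
     <= ln (Cnorm (snd (skew_iter a c N d j (Z, W)))))
    by (apply ln_le'; [apply Rmult_lt_0_compat; lra| exact hk]).
  rewrite ln_mult, ln_pow, pow_INR in hl by lra. fold c0 in hl.
  pose proof (dpow_pos d j Hd) as hP.
  assert (e : INR d ^ j * (INR j * L0 / INR d + c0) = (INR j * INR d ^ j * L0) / INR d + INR d ^ j * c0)
    by (field; lra).
  rewrite e.
  assert ((INR j * INR d ^ j * L0) / INR d <= ln (Bn a c N d Z j)).
  { apply Rmult_le_reg_r with (r := INR d); [lra|].
    unfold Rdiv. rewrite Rmult_assoc, Rinv_l by lra. lra. }
  lra. }
intro M.
set (k0 := (n' + m)%nat).
pose proof (dpow_pos d k0 Hd) as hQ.
destruct (INR_unbounded ((Rabs M * INR d ^ k0 + Rabs c0 + 1) * INR d / L0)) as [j hj].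
exists (j + k0)%nat. intros n hn.
set (j' := (n - k0)%nat).
assert (hnj : n = (j' + k0)%nat) by (unfold j'; lia).
assert (hsk : skew_iter a c N d n (z, w) = skew_iter a c N d j' (Z, W)).
{ rewrite hnj. unfold k0. rewrite skew_iter_add, skew_iter_add.
  fold ZW. unfold Z, W. rewrite <- surjective_pairing. reflexivity. }
rewrite hsk.
assert (hW := hWn j').
pose proof (dpow_pos d j' Hd) as hP.
assert (hjj : INR j <= INR j') by (apply le_INR; unfold j'; lia).
assert (hbig : Rabs M * INR d ^ k0 + Rabs c0 + 1 <= INR j' * L0 / INR d).
{ assert (h1 : (Rabs M * INR d ^ k0 + Rabs c0 + 1) * INR d / L0 < INR j') by lra.
  apply Rmult_lt_compat_r with (r := L0 / INR d) in h1; [|apply Rdiv_lt_0_compat; lra].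
  replace ((Rabs M * INR d ^ k0 + Rabs c0 + 1) * INR d / L0 * (L0 / INR d))
    with (Rabs M * INR d ^ k0 + Rabs c0 + 1) in h1 by (field; lra).
  unfold Rdiv in *. lra. }
assert (hpos : 0 < Cnorm (snd (skew_iter a c N d j' (Z, W)))).
{ destruct (Cnorm_ge0 (snd (skew_iter a c N d j' (Z, W)))) as [h|h]; [exact h|].
  exfalso. apply (hnz j' W hWr). apply Cnorm_eq0'. lra. }
assert (hlp := logp_ge_ln _ hpos).
set (X := logp (Cnorm (snd (skew_iter a c N d j' (Z, W))))) in *.
assert (hX : INR d ^ j' * (Rabs M * INR d ^ k0 + 1) <= X).
{ assert (INR d ^ j' * (Rabs M * INR d ^ k0 + 1) <= INR d ^ j' * (INR j' * L0 / INR d + c0)).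
  { apply Rmult_le_compat_l; [lra|]. pose proof (Rle_abs (- c0)). rewrite Rabs_Ropp in H. lra. }
  lra. }
rewrite hnj, pow_add.
apply Rmult_lt_reg_r with (r := INR d ^ j' * INR d ^ k0); [apply Rmult_lt_0_compat; lra|].
unfold Rdiv. rewrite Rmult_assoc, Rinv_l by (apply Rgt_not_eq, Rmult_lt_0_compat; lra).
rewrite Rmult_1_r.
pose proof (Rle_abs M).
assert (M * (INR d ^ j' * INR d ^ k0) <= Rabs M * INR d ^ k0 * INR d ^ j').
{ replace (M * (INR d ^ j' * INR d ^ k0)) with (M * INR d ^ k0 * INR d ^ j') by ring.
  apply Rmult_le_compat_r; [lra|]. apply Rmult_le_compat_r; lra. }
nra.
Qed.

Theorem theorem6p3
  (d N gamma : nat) (a : nat -> Cx) (c : nat -> nat -> Cx) (alpha Rr : R)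
  (* p(z) = z^d + O(z^{d-1}), d >= 2 *)
  (Hd : (2 <= d)%nat)
  (Ha_lead : a d = Cx1)
  (Ha_deg : forall i, (d < i)%nat -> a i = Cx0)
  (* q(z,w) = sum_{i<=N, j<=d} c i j z^i w^j *)
  (Hc_supp : forall i j, ((N < i)%nat \/ (d < j)%nat) -> c i j = Cx0)
  (* b(z) = sum_i c i d z^i is monic of degree gamma >= 1 (so deg_w q = d) *)
  (Hgamma : (1 <= gamma <= N)%nat)
  (Hb_lead : c gamma d = Cx1)
  (Hb_deg : forall i, (gamma < i)%nat -> c i d = Cx0)
  (* alpha as defined, and alpha > 0 *)
  (Halpha : is_alpha c N d gamma alpha)
  (Halpha_pos : 0 < alpha)
  (* R > 1 with f(W_R) in W_R and W_R in A_p x Cx *)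
  (HR : 1 < Rr)
  (HWinv : forall zw, in_WR alpha Rr zw -> in_WR alpha Rr (skew a c N d zw))
  (HWAp : forall zw, in_WR alpha Rr zw -> in_Ap a d (fst zw)) :
  (* on A_f: d^{-n} log^+ |Q_z^n(w)| -> +infinity *)
  (forall z w,
     (exists n, in_WR alpha Rr (skew_iter a c N d n (z, w))) ->
     cv_infty (fun n => logp (Cnorm (snd (skew_iter a c N d n (z, w)))) / INR d ^ n))
  /\
  (* on B_f: G_p(z) exists and limsup d^{-n} log^+ |Q_z^n(w)| <= alpha G_p(z) *)
  (forall z w,
     in_Ap a d z ->
     ~ (exists n, in_WR alpha Rr (skew_iter a c N d n (z, w))) ->
     exists G : R,
       Un_cv (fun n => logp (Cnorm (Nat.iter n (poly1 a d) z)) / INR d ^ n) G /\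
       (forall eps, eps > 0 -> exists M : nat, forall n, (M <= n)%nat ->
          logp (Cnorm (snd (skew_iter a c N d n (z, w)))) / INR d ^ n <= alpha * G + eps)).
Proof.
split.
- intros z w hex. exact (part1 d N gamma a c alpha Rr Hd Ha_lead Hgamma Hb_lead Hb_deg HR HWinv HWAp z w hex).
- intros z w hz hnot. exact (part2 d N a c alpha Rr Hd Ha_lead HR Halpha_pos z w hz hnot).
Qed.
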